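(* Let $T\subseteq\mathbb{N}^{<\mathbb{N}}$ be a tree, order $\mathcal{JT}(T)$ by the Kleene–Brouwer ordering $\leq_{\mathrm{KB}}$, and define $h\colon T\to\boldsymbol\omega^{\mathcal{JT}(T)}$ by $h(\emptyset)=\omega^{\emptyset}\cdot3$ and, for $\sigma\neq\emptyset$, \[h(\sigma)=\Big(\sum_{i<|J(\sigma)|,\ \{i\}^\sigma(i)\uparrow}\omega^{J(\sigma)\restriction i}\Big)+\omega^{J(\sigma)}\cdot2\] (sum written in $\leq_{\mathrm{KB}}$-decreasing order of $i$ increasing). Then for all $\rho,\sigma\in T$ with $\sigma\subsetneq\rho$ we have $h(\rho)<h(\sigma)$ in $\boldsymbol\omega^{\mathcal{JT}(T)}$.
   Context: Strings are coded by natural numbers via a fixed computable coding with $\sigma\subsetneq\tau$ implying code$(\sigma)<$ code$(\tau)$. $\{i\}^\sigma(i)\uparrow$ means the $i$-th machine on input $i$ with oracle $\sigma$ does not halt in fewer than $|\sigma|$ steps. For finite $\sigma$: $t_{-1}=1$, $t_n=\max\{t_{n-1}+1,\mu t(\{n\}^{\sigma\restriction t}(n)\downarrow)\}$ ($t_n=t_{n-1}+1$ if no such $t$), and $J(\sigma)=\langle\sigma\restriction t_0,\dots,\sigma\restriction t_{k-1}\rangle$ with $k$ least such that $t_k>|\sigma|$; $\mathcal{JT}(T)=\{J(\sigma):\sigma\in T\}$. Kleene–Brouwer ordering: $\sigma\leq_{\mathrm{KB}}\tau$ iff $\sigma\supseteq\tau$ or there is $i$ with $\sigma\restriction i=\tau\restriction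 i$ and $\sigma(i)<\tau(i)$. For a linear ordering $\mathcal{L}$, $\boldsymbol\omega^{\mathcal{L}}$ is the set of finite nonincreasing strings $\langle x_0,\dots,x_{k-1}\rangle$ of elements of $\mathcal{L}$, written $\omega^{x_0}+\dots+\omega^{x_{k-1}}$ (with $\omega^x\cdot m$ meaning $m$ repetitions of $x$), ordered by: $\langle x_0,\dots,x_{k-1}\rangle\leq\langle y_0,\dots,y_{l-1}\rangle$ iff $k\leq l$ and $x_i=y_i$ for $i<k$, or at the least $i$ with $x_i\neq y_i$, $x_i<y_i$. *)

(* Defs.v *)
From mathcomp Require Import all_boot.
Set Implicit Arguments. Unset Strict Implicit. Unset Printing Implicit Defensive.

(* [H i s] abstracts "{i}^s(i)↓", i.e. the i-th oracle machine on input i with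
   oracle s halts in fewer than |s| steps.  [code] is the fixed coding of strings
   by naturals. *)

Section JumpTree.
Variable H : nat -> seq nat -> bool.
Variable code : seq nat -> nat.

(* least t such that {n}^{sigma↾t}(n)↓ ; since sigma↾t = sigma for t >= |sigma|,
   the least such t (if any) is <= |sigma|, so a bounded search is exact. *)
Definition has_mu (n : nat) (s : seq nat) : bool :=
  has (fun t => H n (take t s)) (iota 0 (size s).+1).
Definition mu (n : nat) (s : seq nat) : nat :=
  find (fun t => H n (take t s)) (iota 0 (size s).+1).

(* tseq s n = t_{n-1}:  tseq s 0 = t_{-1} = 1,
   tseq s n.+1 = t_n = max{t_{n-1}+1, mu t (...)}, or t_{n-1}+1 if no such t. *)
Fixpoint tseq (s : seq nat) (n : nat) : nat :=
  match n with
  | 0 => 1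
  | m.+1 => if has_mu m s then maxn (tseq s m).+1 (mu m s) else (tseq s m).+1
  end.

(* k = least k with t_k > |s|; t_k >= k+2, so k <= |s| and a bounded search is exact. *)
Definition Jlen (s : seq nat) : nat :=
  find (fun k => size s < tseq s k.+1) (iota 0 (size s).+1).

Definition J (s : seq nat) : seq (seq nat) :=
  [seq take (tseq s i.+1) s | i <- iota 0 (Jlen s)].

Definition kb_le (a b : seq (seq nat)) : bool :=
  prefix b a ||
  has (fun i => (take i a == take i b) && (code (nth [::] a i) < code (nth [::] b i)))
      (iota 0 (minn (size a) (size b))).
Definition kb_lt (a b : seq (seq nat)) : bool := kb_le a b && (a != b).

Definition om_le (x y : seq (seq (seq nat))) : bool :=
  prefix x y ||
  has (fun i => (take i x == take i y) && (nth [::] x i != nth [::] y i)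
                && kb_lt (nth [::] x i) (nth [::] y i))
      (iota 0 (minn (size x) (size y))).
Definition om_lt (x y : seq (seq (seq nat))) : bool := om_le x y && (x != y).

Definition h (s : seq nat) : seq (seq (seq nat)) :=
  if s == [::] then nseq 3 [::]
  else [seq take i (J s) | i <- iota 0 (size (J s)) & ~~ H i s] ++ [:: J s; J s].

End JumpTree.

(* Main.v *)
Require Import Defs.
From mathcomp Require Import all_boot.
Set Implicit Arguments. Unset Strict Implicit. Unset Printing Implicit Defensive.

Definition g (A : seq (seq nat)) (S : nat -> bool) (j : nat) :=
  [seq take i A | i <- iota j (size A - j) & S i] ++ [:: A; A].

Lemma g_step A S j : j < size A ->
  g A S j = if S j then take j A :: g A S j.+1 else g A S j.+1.
Proof.
move=> hj; rewrite /g.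
have -> : size A - j = (size A - j.+1).+1 by rewrite subnSK.
by rewrite /=; case: (S j).
Qed.

Lemma g_end A S j : size A <= j -> g A S j = [:: A; A].
Proof. by move=> hj; rewrite /g (eqP (_ : size A - j == 0)) // subn_eq0. Qed.

Lemma prefix_take i (x : seq (seq nat)) : prefix (take i x) x.
Proof. by apply/prefixP; exists (drop i x); rewrite cat_take_drop. Qed.

Lemma prefix_tt i j (x : seq (seq nat)) : i <= j -> prefix (take i x) (take j x).
Proof. by move=> hij; rewrite -(take_takel x hij) prefix_take. Qed.

Lemma prefix_size (x y : seq (seq nat)) : prefix x y -> size x <= size y.
Proof. by move/prefixP=> [w ->]; rewrite size_cat leq_addr. Qed.

Lemma g_head A S j : j <= size A ->
  exists z zs, g A S j = z :: zs /\ prefix (take j A) z.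
Proof.
move=> hj; move: {2}(size A - j) (erefl (size A - j)) => d.
elim: d j hj => [|d IH] j hj hd.
  have hj' : size A <= j by rewrite -subn_eq0 hd.
  rewrite g_end //; exists A, [:: A]; split => //.
  by rewrite take_oversize // prefix_refl.
have hj' : j < size A by rewrite -subn_gt0 hd.
rewrite g_step //; case: (S j).
  by exists (take j A), (g A S j.+1); rewrite prefix_refl.
have e : size A - j.+1 = d by rewrite subnS hd.
have [z [zs [-> hp]]] := IH j.+1 hj' e.
exists z, zs; split => //; apply: prefix_trans hp; exact: prefix_tt.
Qed.

Lemma kb_lt_ext code (z B : seq (seq nat)) : prefix B z -> size B < size z ->
  kb_lt code z B.
Proof.
move=> hp hs; rewrite /kb_lt /kb_le hp /=; apply/eqP => E; subst.
by rewrite ltnn in hs.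
Qed.

Lemma gh code A S j B : j < size A -> prefix B (take j A) -> size B <= j ->
  exists z zs, g A S j.+1 = z :: zs /\ kb_lt code z B.
Proof.
move=> hj hB hs; have [z [zs [E hp]]] := g_head S hj.
exists z, zs; split => //; apply: kb_lt_ext.
  apply: prefix_trans hB (prefix_trans (prefix_tt A (leqnSn j)) hp).
have := prefix_size hp; rewrite size_takel //; exact: leq_trans.
Qed.

Definition P code (x y : seq (seq (seq nat))) := exists q, q < size x /\ q < size y /\
  take q x = take q y /\ kb_lt code (nth [::] x q) (nth [::] y q).

Lemma P_cons code z x y : P code x y -> P code (z :: x) (z :: y).
Proof. by move=> [q [h1 [h2 [h3 h4]]]]; exists q.+1; rewrite /= h3. Qed.

Lemma P_head code a b x y : kb_lt code a b -> P code (a :: x) (b :: y).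
Proof. by move=> h; exists 0. Qed.

Lemma P_om code x y : P code x y -> om_lt code x y.
Proof.
move=> [q [h1 [h2 [h3 h4]]]]; rewrite /om_lt /om_le.
have hne : nth [::] x q != nth [::] y q by case/andP: h4.
apply/andP; split.
  apply/orP; right; apply/hasP; exists q.
    by rewrite mem_iota add0n leq_min h1 h2.
  by rewrite h3 eqxx hne h4.
by apply/eqP => E; subst; rewrite eqxx in hne.
Qed.

Lemma abs (code : seq nat -> nat) (A B : seq (seq nat)) (Sa Sb : nat -> bool) p : take p A = take p B -> p < size A -> p <= size B ->
  (forall i, Sa i -> Sb i) -> (p = size B \/ (p < size B /\ Sb p /\ ~~ Sa p)) ->
  P code (g A Sa 0) (g B Sb 0).
Proof.
move=> ht hA hB hS hp.
suff: forall n, n <= p -> P code (g A Sa (p - n)) (g B Sb (p - n)).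
  by move/(_ p (leqnn p)); rewrite subnn.
elim => [|n IH] hn.
  rewrite subn0; case: hp => [hp|[hpB [hSb hSa]]].
    rewrite [g B _ _]g_end; last by rewrite hp.
    have hpre : prefix B (take p A) by rewrite ht hp take_size prefix_refl.
    have [z [zs [E hz]]] := gh code Sa hA hpre (eq_leq (esym hp)).
    rewrite g_step //; case: (Sa p); rewrite E.
      have -> : take p A = B by rewrite ht hp take_size.
      by apply: P_cons; apply: P_head.
    by apply: P_head.
  rewrite [g B _ _]g_step // hSb.
  rewrite g_step // (negbTE hSa).
  have hpre : prefix (take p B) (take p A) by rewrite ht prefix_refl.
  have e : size (take p B) <= p by rewrite size_take hpB.
  have [z [zs [E hz]]] := gh code Sa hA hpre e.
  by rewrite E; apply: P_head.
have hjp : p - n.+1 < p by rewrite subnS prednK ?subn_gt0 // leq_subr.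
set j := p - n.+1 in hjp *.
have hjS : j.+1 = p - n by rewrite /j subnS prednK // subn_gt0.
have hjA : j < size A := ltn_trans hjp hA.
have hjB : j < size B := leq_trans hjp hB.
have htj : take j A = take j B by rewrite -(take_takel A (ltnW hjp)) ht take_takel // ltnW.
have IH' := IH (ltnW hn); rewrite -hjS in IH'.
rewrite (g_step _ hjA) (g_step _ hjB).
case hSa: (Sa j).
  by rewrite (hS _ hSa) htj; apply: P_cons.
case hSb: (Sb j) => //.
have hpre : prefix (take j B) (take j A) by rewrite htj prefix_refl.
have e : size (take j B) <= j by rewrite size_take hjB.
have [z [zs [E hz]]] := gh code Sa hjA hpre e.
by rewrite E; apply: P_head.
Qed.
Lemma prefix_takes (i : nat) (x : seq nat) : prefix (take i x) x.
Proof. by apply/prefixP; exists (drop i x); rewrite cat_take_drop. Qed.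

Lemma prefix_sz (T : eqType) (x y : seq T) : prefix x y -> size x <= size y.
Proof. by move/prefixP=> [w ->]; rewrite size_cat leq_addr. Qed.

Lemma has_muE (H : nat -> seq nat -> bool)
  (H_use : forall (i : nat) (s t : seq nat), prefix s t -> H i s -> H i t) m x :
  has_mu H m x = H m x.
Proof.
rewrite /has_mu; apply/idP/idP => [/hasP[t _ ht]|hx].
  exact: H_use (prefix_takes t x) ht.
apply/hasP; exists (size x); first by rewrite mem_iota leq0n add0n ltnSn. by rewrite /= take_size.
Qed.

Lemma mu_le H m x : has_mu H m x -> mu H m x <= size x.
Proof. by rewrite /has_mu /mu has_find size_iota. Qed.

Lemma take_pref (s r : seq nat) t : prefix s r -> t <= size s -> take t r = take t s.
Proof. by move/prefixP=> [w ->] ht; rewrite takel_cat. Qed.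

Lemma mu_eq (H : nat -> seq nat -> bool)
  (H_use : forall (i : nat) (s t : seq nat), prefix s t -> H i s -> H i t) m s r :
  prefix s r -> H m s -> mu H m r = mu H m s.
Proof.
move=> hp hs; have hsz := prefix_sz hp.
rewrite /mu.
have -> : (size r).+1 = (size s).+1 + (size r - size s) by rewrite addSn subnKC.
rewrite iotaD find_cat.
have eqi : {in iota 0 (size s).+1, (fun t => H m (take t r)) =1 (fun t => H m (take t s))}.
  by move=> t; rewrite mem_iota add0n => /andP[_ ht] /=; rewrite (take_pref hp).
rewrite (eq_in_has eqi) (eq_in_find eqi).
have -> // : has (fun t => H m (take t s)) (iota 0 (size s).+1).
apply/hasP; exists (size s); first by rewrite mem_iota leq0n add0n ltnSn. by rewrite /= take_size.
Qed.

Lemma tseq_S H x n : tseq H x n < tseq H x n.+1.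
Proof. by rewrite /=; case: (has_mu H n x) => //; rewrite leq_maxl. Qed.

Lemma tseq_mono H x m n : m <= n -> tseq H x m <= tseq H x n.
Proof.
move=> hmn; rewrite -(subnKC hmn); elim: (n - m) => [|d IH]; first by rewrite addn0.
by rewrite addnS (leq_trans IH) // ltnW // tseq_S.
Qed.

Lemma tseq_ge H x n : n < tseq H x n.
Proof. by elim: n => [|n IH] //; apply: leq_trans (tseq_S H x n). Qed.

Lemma tseq_up H x n : tseq H x n.+1 <= maxn (tseq H x n).+1 (size x).
Proof.
rewrite /=; case hm: (has_mu H n x); last by rewrite leq_maxl.
by rewrite geq_max leq_maxl (leq_trans (mu_le hm)) // leq_maxr.
Qed.

Lemma Jlen_spec H x n : (n < Jlen H x) = (tseq H x n.+1 <= size x).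
Proof.
have hhas : has (fun k => size x < tseq H x k.+1) (iota 0 (size x).+1).
  apply/hasP; exists (size x); first by rewrite mem_iota leq0n add0n ltnSn.
  exact: ltn_trans (tseq_ge H x (size x).+1).
have hlt : Jlen H x < (size x).+1 by move: hhas; rewrite has_find size_iota.
have hQ : size x < tseq H x (Jlen H x).+1.
  by have := nth_find 0 hhas; rewrite nth_iota.
apply/idP/idP => [hn|hn].
  have := before_find 0 hn; rewrite nth_iota ?add0n; last exact: ltn_trans hlt.
  by move/negbT; rewrite -leqNgt.
rewrite ltnNge; apply/negP => hle.
have := tseq_mono H x (hle : (Jlen H x).+1 <= n.+1).
by move/(leq_trans hQ); rewrite ltnNge hn.
Qed.

Lemma hE H x : [seq take i (J H x) | i <- iota 0 (size (J H x)) & ~~ H i x] ++ [:: J H x; J H x]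
  = g (J H x) (fun i => ~~ H i x) 0.
Proof. by rewrite /g subn0. Qed.

Lemma size_J H x : size (J H x) = Jlen H x.
Proof. by rewrite /J size_map size_iota. Qed.

Theorem lemma4p11
  (code : seq nat -> nat)
  (code_inj : injective code)
  (code_mono : forall s t : seq nat, prefix s t -> s != t -> code s < code t)
  (H : nat -> seq nat -> bool)
  (H_use : forall (i : nat) (s t : seq nat), prefix s t -> H i s -> H i t)
  (T : seq nat -> Prop)
  (T_tree : forall s t : seq nat, prefix s t -> T t -> T s) :
  forall rho sigma : seq nat, T rho -> T sigma ->
    prefix sigma rho -> sigma != rho ->
    om_lt code (h H rho) (h H sigma).
Proof.
move=> r s _ _ hp hne.
have hsz : size s < size r.
  rewrite ltn_neqAle prefix_sz // andbT; apply/eqP => E.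
  move: hp; rewrite prefixE E take_size => /eqP E'; by rewrite E' eqxx in hne.
have hr0 : r != [::] by apply/eqP => E; rewrite E in hsz.
case: (eqVneq s [::]) => [->|hs0].
  rewrite /h eqxx (negbTE hr0) hE.
  case: (posnP (size (J H r))) => [hz|hpos].
    rewrite g_end ?hz // (size0nil hz).
    by rewrite /om_lt /om_le /=.
  apply: P_om; change (nseq 3 [::]) with [:: [::] : seq (seq nat); [::]; [::]].
  have hpre : prefix [::] (take 0 (J H r)) by rewrite prefix0s.
  have [z [zs [E hz]]] := gh code (fun i => ~~ H i r) hpos hpre (leqnn 0).
  rewrite g_step //; case: (~~ H 0 r); rewrite E ?take0.
    by apply: P_cons; apply: P_head.
  by apply: P_head.
rewrite /h (negbTE hs0) (negbTE hr0) !hE; apply: P_om.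
set p := find (fun n => tseq H s n.+1 != tseq H r n.+1) (iota 0 (Jlen H s)).
have hpk : p <= Jlen H s by have := find_size (fun n => tseq H s n.+1 != tseq H r n.+1) (iota 0 (Jlen H s)); rewrite size_iota.
have hagree : forall n, n < p -> tseq H s n.+1 = tseq H r n.+1.
  move=> n hn; have := before_find 0 hn; rewrite nth_iota ?add0n; last exact: leq_trans hn hpk.
  by move/negbT; rewrite negbK => /eqP.
have hs1 : 0 < size s by rewrite lt0n size_eq0.
have htr : tseq H r p <= size s.
  case hpp : p => [|n] //; rewrite -hagree ?hpp //.
  by rewrite -Jlen_spec -hpp.
have hpk' : p < Jlen H r.
  rewrite Jlen_spec (leq_trans (tseq_up H r p)) // geq_max leqnn andbT.
  exact: leq_ltn_trans htr hsz.
apply: (@abs code _ _ _ _ p).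
- rewrite /J -!map_take !take_iota (minn_idPl (ltnW hpk')) (minn_idPl hpk).
  apply/eq_in_map => i; rewrite mem_iota add0n => /andP[_ hi].
  rewrite -hagree // (take_pref hp) //.
  by rewrite -Jlen_spec (leq_trans hi hpk).
- by rewrite size_J.
- by rewrite size_J.
- by move=> i; apply: contra; apply: H_use.
case: (ltnP p (Jlen H s)) => hpl; last by left; rewrite size_J; apply/eqP; rewrite eqn_leq hpk hpl.
right; rewrite size_J; split => //.
have hhas : has (fun n => tseq H s n.+1 != tseq H r n.+1) (iota 0 (Jlen H s)).
  by rewrite has_find size_iota.
have hd := nth_find 0 hhas; rewrite -/p nth_iota // add0n in hd.
have hts : tseq H s p = tseq H r p.
  by case hpp : p => [|n] //; rewrite hagree // hpp.
have hnHs : ~~ H p s.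
  apply/negP => hHs; move: hd.
  by rewrite /= !(has_muE H_use) hHs (H_use _ _ _ hp hHs) (mu_eq H_use hp hHs) hts eqxx.
split => //; apply/negP => hnr; move: hd.
by rewrite /= !(has_muE H_use) (negbTE hnr) (negbTE hnHs) hts eqxx.
Qed.
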